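(* Assume the setting below, in which $Q:[0,T_1)\to\mathbb{R}$ is defined by $Q(t)=\int_{B_{R(t)}}\mathbf x\cdot\mathbf u\sqrt{1+|\mathbf u|^2}(\varrho+p+\Pi)\,dx$ for a solution existing on $[0,T_1)$, $E=E(0)>0$, $R(t)=R_0+ct$ with $0<c<1$, and $b$ is the constant below. Suppose $Q$ satisfies on $[0,T_1)$ $$\dot Q\ge E+bR^3-\sqrt{(E+bR^3)^2-\frac{Q^2}{R^2}}-kR^3$$ for some constant $k>0$. Assume there exists $\bar R>R_0$ such that, with $A=c\big(1+\frac{3b\bar R^3}{E+b\bar R^3}\big)$ and $B=\frac{k\bar R^3}{E+b\bar R^3}$, $$A^2+2B-B^2>0,\quad A+B<1,\quad z_0:=\frac{A(1-B)+\sqrt{A^2+2B-B^2}}{A^2+1}<1,$$ $$\int_{\frac12+\frac{z_0}{2}}^1\frac{dz}{1-\sqrt{1-z^2}-Az-B}<\log\Big(\frac{\bar R}{R_0}\Big),\qquad \frac{Q(0)}{R_0(E+bR_0^3)}>\frac{z_0}{2}+\frac12.$$ Then $T_1<(\bar R-R_0)/c$; i.e. $Q$ is necessarily defined only on a finite interval and cannot be extended smoothly, as a function satisfying the differential inequality, up to time $(\bar R-R_0)/c$.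
   Context: Setting: Minkowski space $\mathbb{R}^{1+3}$ ($g=\mathrm{diag}(-1,1,1,1)$), $B_R=\{|x|<R\}$. $(\varrho,n,\Pi,u)$ is a smooth admissible solution of the Müller–Israel–Stewart equations $u^\alpha\partial_\alpha\varrho+(\varrho+p+\Pi)\partial_\alpha u^\alpha=0$, $(\varrho+p+\Pi)u^\beta\partial_\beta u_\alpha+(g_\alpha^\beta+u_\alpha u^\beta)\partial_\beta(p+\Pi)=0$, $u^\alpha\partial_\alpha n+n\partial_\alpha u^\alpha=0$, $\tau_0u^\alpha\partial_\alpha\Pi+\Pi+\lambda\Pi^2+\zeta\partial_\alpha u^\alpha=0$ (values in $\mathcal P=\{\varrho>0,n>0,0<c_s^2<1\}$, $c_s^2=\frac{\zeta}{\tau_0(\varrho+p+\Pi)}+\partial_\varrho p+\frac{n\partial_np}{\varrho+p+\Pi}$), under assumptions (A1)–(A5): (A1) $p,\zeta,\tau_0$ smooth on $\mathbb{R}^+\times\mathbb{R}^+$ with smooth extensions to $\mathbb{R}\times\mathbb{R}^+$, constants $p_0,p_1\ge0$ with $-\varrho\le p\le\varrho+p_1$, $-p_0<p$ at physical states; (A2) $p$ globally Lipschitz on $\mathbb{R}\times\mathbb{R}^+$, $\partial_\varrho p,\partial_np\ne0$ at physical states; (A3) $\zeta\ge0$, $\tau_0>c'>0$ smooth on $\mathbb{R}\times\mathbb{R}^+$, $\partial_\varrho(\zeta/\tau_0),\partial_n(\zeta/\tau_0)$ bounded, $\partial_\varrho(\zeta/\tau_0)\ge0$; (A4) $\int_0^\infty\frac1n\sup_\varrho|\zeta/\tau_0|dn\le\bar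 A$ for a constant $\bar A>0$; (A5) $\lambda\equiv0$ or $\lambda>0$ smooth with $p+\varrho<1/\lambda$ at physical states. The initial data satisfy $\mathring\varrho+p+\mathring\Pi\ge0$ and the solution equals $(\bar\varrho,\bar n,0,\mathbf u=0)$ outside $B_{R(t)}$. $E=\int_{\mathbb{R}^3}\big((\varrho+p+\Pi)(u^0)^2-(p+\Pi)-\bar\varrho\big)dx$ at $t=0$, with $u^0=\sqrt{1+|\mathbf u|^2}$. $b=\frac{4\pi}{3}(\bar\varrho+p_1+\|\mathring\Pi\|_\infty+3\bar A)$. *)

(* Defs.v *)
From Stdlib Require Import Reals.
From Coquelicot Require Import Coquelicot.
Open Scope R_scope.

Definition radius (R0 c t : R) : R := R0 + c * t.

Definition constA (c b E Rbar : R) : R :=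
  c * (1 + 3 * b * Rbar ^ 3 / (E + b * Rbar ^ 3)).

Definition constB (k b E Rbar : R) : R := k * Rbar ^ 3 / (E + b * Rbar ^ 3).

Definition z0 (A B : R) : R :=
  (A * (1 - B) + sqrt (A ^ 2 + 2 * B - B ^ 2)) / (A ^ 2 + 1).

Definition integrand (A B z : R) : R := / (1 - sqrt (1 - z ^ 2) - A * z - B).

(* Main.v *)
Require Import Defs.
From Stdlib Require Import Reals Lra Psatz.
From Coquelicot Require Import Coquelicot.
Open Scope R_scope.

Lemma fpos A B y : 0 < A -> A^2+2*B-B^2 > 0 -> z0 A B < y -> A*y + B < 1 ->
  0 < 1 - sqrt(1-y^2) - A*y - B.
Proof.
  intros HA HD Hz Hy.
  destruct (Rle_or_lt (1-y^2) 0) as [Hn|Hp].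
  { rewrite sqrt_neg_0 by lra. lra. }
  unfold z0 in Hz.
  set (D := A^2+2*B-B^2) in *.
  assert (Hs0 : 0 <= sqrt D) by apply sqrt_pos.
  assert (Hs2 : sqrt D * sqrt D = D) by (apply sqrt_sqrt; lra).
  assert (HA1 : 0 < A^2+1) by nra.
  assert (Hw : A*(1-B) + sqrt D < y*(A^2+1)).
  { apply Rmult_lt_compat_r with (r := A^2+1) in Hz; auto.
    unfold Rdiv in Hz. rewrite Rmult_assoc, Rinv_l in Hz by lra. lra. }
  set (w := y*(A^2+1) - A*(1-B)).
  assert (Hw2 : w*w > D) by (unfold w; nra).
  assert (Hk : ((1-B-A*y)^2 - (1-y^2)) * (A^2+1) = w*w - D) by (unfold w, D; ring).
  assert (Hq : (1-B-A*y)^2 > 1-y^2) by nra.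
  assert (Hu0 : 0 <= sqrt (1-y^2)) by apply sqrt_pos.
  assert (Hu2 : sqrt (1-y^2) * sqrt (1-y^2) = 1-y^2) by (apply sqrt_sqrt; lra).
  nra.
Qed.

Lemma integrand_cont A B y : 1 - sqrt(1-y^2) - A*y - B <> 0 -> continuous (integrand A B) y.
Proof.
  intros H. unfold integrand.
  apply (continuous_Rinv_comp (fun z => 1 - sqrt(1-z^2) - A*z - B)); [|auto].
  apply (continuous_ext (fun z => minus (1 - A*z - B) (sqrt (1 - z^2)))).
  { intros; unfold minus, plus, opp; simpl; ring. }
  apply (continuous_minus (V := R_NormedModule) (fun z => 1 - A*z - B) (fun z => sqrt (1 - z^2))).
  - apply ex_derive_continuous; auto_derive; auto.
  - apply (continuous_comp (U := R_UniformSpace) (V := R_UniformSpace) (W := R_UniformSpace) (fun z => 1 - z^2) sqrt).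
    + apply (ex_derive_continuous (K := R_AbsRing) (V := R_NormedModule) (fun z => 1 - z^2)); auto_derive; auto.
    + apply continuous_sqrt.
Qed.

Lemma G_deriv A B z1 x : 0 < A -> A^2+2*B-B^2 > 0 ->
  z0 A B < z1 -> A*z1+B < 1 -> z0 A B < x -> A*x+B < 1 ->
  is_derive (fun y => RInt (integrand A B) z1 y) x (integrand A B x).
Proof.
  intros HA HD H1 H2 H3 H4.
  assert (Hdom : forall y, z0 A B < y -> A*y+B<1 -> continuous (integrand A B) y).
  { intros y Hy1 Hy2. apply integrand_cont. pose proof (fpos A B y HA HD Hy1 Hy2). lra. }
  apply (is_derive_RInt (V := R_NormedModule) (integrand A B) (fun y => RInt (integrand A B) z1 y) z1 x); [|apply Hdom; auto].
  assert (He : 0 < Rmin (x - z0 A B) ((1 - B - A*x)/A)).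
  { apply Rmin_glb_lt. lra. apply Rdiv_lt_0_compat; lra. }
  exists (mkposreal _ He). intros y Hy.
  change (Rabs (y - x) < Rmin (x - z0 A B) ((1 - B - A*x)/A)) in Hy.
  pose proof (Rmin_l (x - z0 A B) ((1 - B - A*x)/A)).
  pose proof (Rmin_r (x - z0 A B) ((1 - B - A*x)/A)).
  apply Rabs_lt_between in Hy.
  assert (Hy1 : z0 A B < y) by lra.
  assert (Hy2 : A*y + B < 1).
  { assert (Hq : y - x < (1 - B - A*x)/A) by lra.
    assert (Hq2 : A*(y-x) < A*((1-B-A*x)/A)) by (apply Rmult_lt_compat_l; lra).
    replace (A*((1-B-A*x)/A)) with (1-B-A*x) in Hq2 by (field; lra).
    lra. }
  apply (RInt_correct (V := R_CompleteNormedModule)), (ex_RInt_continuous (V := R_CompleteNormedModule)).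
  intros z [Hz1 Hz2]. apply Hdom.
  - apply Rlt_le_trans with (Rmin z1 y); auto. apply Rmin_glb_lt; lra.
  - assert (Rmax z1 y <= Rmax z1 y) by lra.
    destruct (Rle_or_lt z1 y).
    + rewrite Rmax_right in Hz2 by lra. nra.
    + rewrite Rmax_left in Hz2 by lra. nra.
Qed.
Lemma mono_le (g dg : R -> R) a b : a <= b ->
  (forall x, a < x < b -> is_derive g x (dg x)) ->
  (forall x, a <= x <= b -> continuous g x) ->
  (forall x, a < x < b -> 0 <= dg x) -> g a <= g b.
Proof.
  intros Hab Hd Hc Hp.
  destruct (MVT_gen g a b (fun x => Rmax 0 (dg x))) as [x [_ Hx]].
  - rewrite Rmin_left, Rmax_right by lra. intros x Hx.
    rewrite Rmax_right by (apply Hp; lra). auto.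
  - rewrite Rmin_left, Rmax_right by lra. intros x Hx.
    apply continuity_pt_filterlim, Hc; lra.
  - assert (0 <= Rmax 0 (dg x)) by apply Rmax_l. nra.
Qed.

Lemma cont_loc (g : R -> R) x L : continuous g x -> g x > L ->
  exists d, 0 < d /\ forall v, Rabs (v - x) < d -> g v > L.
Proof.
  intros Hc Hx.
  apply continuity_pt_filterlim in Hc.
  destruct (proj1 (continuity_pt_locally g x) Hc (mkposreal (g x - L) ltac:(lra))) as [d Hd].
  exists d. split; [apply cond_pos|]. intros v Hv.
  specialize (Hd v Hv). simpl in Hd.
  apply Rabs_lt_between in Hd. lra.
Qed.

Lemma stay_above (g : R -> R) a b L : a <= b -> g a > L ->
  (forall x, a <= x <= b -> continuous g x) ->
  (forall x, a < x < b -> ex_derive g x) ->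
  (forall x, a < x < b -> g x > L -> 0 <= Derive g x) ->
  forall x, a <= x <= b -> g x > L.
Proof.
  intros Hab Ha Hc Hd Hp s1 Hs1.
  destruct (Rlt_or_le L (g s1)) as [|Hle]; [lra|exfalso].
  set (S := fun u => a <= u <= s1 /\ forall v, a <= v <= u -> g v > L).
  destruct (completeness S) as [tau [Hub Hlub]].
  { exists s1. intros u [Hu _]. lra. }
  { exists a. split; [lra|]. intros v Hv. replace v with a by lra. auto. }
  assert (Hat : a <= tau).
  { apply Hub. split; [lra|]. intros v Hv. replace v with a by lra. auto. }
  assert (Hts : tau <= s1).
  { apply Hlub. intros u [Hu _]. lra. }
  assert (C1 : forall v, a <= v < tau -> g v > L).
  { intros v Hv. destruct (Rlt_or_le v tau) as [Hlt|]; [|lra].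
    destruct (Classical_Prop.classic (exists u, S u /\ v < u)) as [[u [[Hu1 Hu2] Hu3]]|Hn].
    - apply Hu2. lra.
    - assert (tau <= v); [|lra]. apply Hlub. intros u Su.
      destruct (Rle_or_lt u v); auto. exfalso; apply Hn; eauto. }
  assert (C2 : g tau <= L).
  { destruct (Rle_or_lt (g tau) L) as [|Hgt]; auto. exfalso.
    destruct (Req_dec tau s1) as [->|Hne]; [lra|].
    destruct (cont_loc g tau L (Hc tau ltac:(lra)) Hgt) as [d [Hd0 Hdd]].
    set (u' := Rmin (tau + d/2) s1).
    assert (tau < u').
    { unfold u'. apply Rmin_glb_lt; lra. }
    assert (S u').
    { split. split; [lra|apply Rmin_r].
      intros v Hv. destruct (Rlt_or_le v tau). apply C1; lra.
      apply Hdd. assert (u' <= tau + d/2) by apply Rmin_l.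
      rewrite Rabs_right; lra. }
    assert (u' <= tau) by (apply Hub; auto). lra. }
  assert (a < tau).
  { destruct (Req_dec a tau) as [<-|]; lra. }
  assert (g a <= g tau); [|lra].
  apply (mono_le g (Derive g)); [lra| | |].
  - intros x Hx. apply Derive_correct, Hd. lra.
  - intros x Hx. apply Hc. lra.
  - intros x Hx. apply Hp. lra. apply C1. lra.
Qed.

Lemma key_ineq E b k c Rbar R q dq : 0 < E -> 0 < b -> 0 < k -> 0 < c ->
  0 < R -> R <= Rbar ->
  q^2/R^2 <= (E + b*R^3)^2 ->
  dq >= E + b*R^3 - sqrt ((E + b*R^3)^2 - q^2/R^2) - k*R^3 ->
  0 <= q/(R*(E + b*R^3)) ->
  dq/(R*(E+b*R^3)) - q/(R*(E + b*R^3)) * (c*((E+b*R^3) + 3*b*R^3))/(R*(E+b*R^3)) >=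
  (1 - sqrt(1 - (q/(R*(E + b*R^3)))^2) - constA c b E Rbar * (q/(R*(E + b*R^3)))
     - constB k b E Rbar)/R.
Proof.
  intros HE Hb Hk Hc HR HRR Hdom Hd Hz.
  set (P := E + b*R^3) in *.
  set (z := q/(R*P)) in *.
  assert (HP : 0 < P) by (unfold P; assert (0 < R^3) by (apply pow_lt; lra); nra).
  set (Pb := E + b*Rbar^3).
  assert (HR3 : R^3 <= Rbar^3) by (apply pow_incr; lra).
  assert (HPb : 0 < Pb) by (unfold Pb; assert (0 < Rbar^3) by (apply pow_lt; lra); nra).
  assert (Hkey : R^3 * Pb <= Rbar^3 * P) by (unfold Pb, P; nra).
  assert (Heq : P^2 - q^2/R^2 = P^2 * (1 - z^2)) by (unfold z; field; lra).
  assert (H1z : 0 <= 1 - z^2).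
  { assert (0 <= P^2 * (1 - z^2)) by lra.
    assert (0 < P^2) by nra. nra. }
  rewrite Heq, sqrt_mult, sqrt_pow2 in Hd by nra.
  set (S := sqrt (1 - z^2)) in *.
  set (A := constA c b E Rbar). set (B := constB k b E Rbar).
  assert (hB : P*B - k*R^3 = k*(Rbar^3*P - R^3*Pb)/Pb) by (unfold B, constB; fold Pb; field; lra).
  assert (hA : P*A - c*(P+3*b*R^3) = 3*b*c*(Rbar^3*P - R^3*Pb)/Pb) by (unfold A, constA; fold Pb; field; lra).
  assert (hB0 : 0 <= k*(Rbar^3*P - R^3*Pb)/Pb).
  { unfold Rdiv; apply Rmult_le_pos; [nra | left; apply Rinv_0_lt_compat; lra]. }
  assert (hA0 : 0 <= 3*b*c*(Rbar^3*P - R^3*Pb)/Pb).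
  { unfold Rdiv; apply Rmult_le_pos; [|left; apply Rinv_0_lt_compat; lra].
    apply Rmult_le_pos; nra. }
  replace (dq / (R * P) - z * (c * (P + 3 * b * R ^ 3)) / (R * P))
    with ((dq - z*(c*(P+3*b*R^3))) * / (R*P)) by (field; lra).
  replace ((1 - S - A * z - B) / R) with ((P*(1 - S - A*z - B)) * / (R*P)) by (field; lra).
  apply Rle_ge, Rmult_le_compat_r.
  { left; apply Rinv_0_lt_compat; nra. }
  nra.
Qed.

Theorem mainTheorem10
  (E b k c R0 Rbar T1 : R) (Q : R -> R)
  (hE : 0 < E) (hb : 0 < b) (hk : 0 < k)
  (hc0 : 0 < c) (hc1 : c < 1) (hR0 : 0 < R0) (hRbar : R0 < Rbar)
  (* Q is continuous on [0,T1) *)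
  (hQcont : forall t, 0 <= t < T1 -> continuous Q t)
  (* Q is differentiable on (0,T1) *)
  (hQder : forall t, 0 < t < T1 -> ex_derive Q t)
  (* the square root in the differential inequality is well defined *)
  (hdom : forall t, 0 <= t < T1 ->
     (Q t) ^ 2 / (radius R0 c t) ^ 2 <= (E + b * (radius R0 c t) ^ 3) ^ 2)
  (* the differential inequality *)
  (hineq : forall t, 0 < t < T1 ->
     Derive Q t >=
       E + b * (radius R0 c t) ^ 3
       - sqrt ((E + b * (radius R0 c t) ^ 3) ^ 2 - (Q t) ^ 2 / (radius R0 c t) ^ 2)
       - k * (radius R0 c t) ^ 3)
  (hAB1 : (constA c b E Rbar) ^ 2 + 2 * constB k b E Rbar - (constB k b E Rbar) ^ 2 > 0)
  (hAB2 : constA c b E Rbar + constB k b E Rbar < 1)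
  (hz0 : z0 (constA c b E Rbar) (constB k b E Rbar) < 1)
  (hint : RInt (integrand (constA c b E Rbar) (constB k b E Rbar))
            (1 / 2 + z0 (constA c b E Rbar) (constB k b E Rbar) / 2) 1
          < ln (Rbar / R0))
  (hQ0 : Q 0 / (R0 * (E + b * R0 ^ 3))
          > z0 (constA c b E Rbar) (constB k b E Rbar) / 2 + 1 / 2) :
  T1 < (Rbar - R0) / c.
Proof.
  assert (HRb0 : 0 < Rbar^3) by (apply pow_lt; lra).
  assert (HA : 0 < constA c b E Rbar).
  { unfold constA. apply Rmult_lt_0_compat; auto.
    assert (0 <= 3*b*Rbar^3/(E+b*Rbar^3)); [|lra].
    unfold Rdiv; apply Rmult_le_pos; [nra| left; apply Rinv_0_lt_compat; nra]. }
  assert (HB : 0 < constB k b E Rbar).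
  { unfold constB. apply Rdiv_lt_0_compat; nra. }
  set (A := constA c b E Rbar) in *.
  set (B := constB k b E Rbar) in *.
  set (zz := z0 A B) in *.
  set (z1 := 1/2 + zz/2) in *.
  assert (Hzz : 0 < zz).
  { unfold zz, z0. apply Rdiv_lt_0_compat; [|nra].
    pose proof (sqrt_pos (A^2+2*B-B^2)). nra. }
  assert (Hz1a : zz < z1) by (unfold z1; lra).
  assert (Hz1b : z1 < 1) by (unfold z1; lra).
  assert (Hz1c : A*z1 + B < 1) by nra.
  destruct (Rlt_or_le T1 ((Rbar-R0)/c)) as [|HT]; [assumption|exfalso].
  set (I := RInt (integrand A B) z1 1) in *.
  assert (HI : R0 * exp I < Rbar).
  { assert (Hx : exp I < Rbar/R0).
    { rewrite <- (exp_ln (Rbar/R0)) by (apply Rdiv_lt_0_compat; lra).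
      apply exp_increasing; lra. }
    replace Rbar with (R0*(Rbar/R0)) by (field; lra).
    apply Rmult_lt_compat_l; lra. }
  set (r := (Rmax (R0*exp I) R0 + Rbar)/2).
  assert (Hm1 := Rmax_l (R0*exp I) R0).
  assert (Hm2 := Rmax_r (R0*exp I) R0).
  assert (Hm3 : Rmax (R0*exp I) R0 < Rbar) by (apply Rmax_lub_lt; lra).
  assert (Hr1 : R0 < r) by (unfold r; lra).
  assert (Hr2 : r < Rbar) by (unfold r; lra).
  assert (Hr3 : R0 * exp I < r) by (unfold r; lra).
  set (t := (r - R0)/c).
  assert (Ht0 : 0 < t) by (apply Rdiv_lt_0_compat; lra).
  assert (Hrt : R0 + c * t = r) by (unfold t; field; lra).
  assert (HtT : t < T1).
  { assert (t < (Rbar - R0)/c); [|lra].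
    unfold t, Rdiv; apply Rmult_lt_compat_r; [apply Rinv_0_lt_compat; lra | lra]. }
  assert (Hrad : forall s, 0 <= s <= t -> R0 <= radius R0 c s <= r).
  { intros s Hs. unfold radius. nra. }
  assert (HPpos : forall s, 0 <= s <= t -> 0 < E + b * radius R0 c s ^ 3).
  { intros s Hs. specialize (Hrad s Hs).
    assert (0 < radius R0 c s ^ 3) by (apply pow_lt; lra). nra. }
  set (zf := fun s => Q s / (radius R0 c s * (E + b * radius R0 c s ^ 3))).
  assert (Hle1 : forall s, 0 <= s <= t -> zf s <= 1).
  { intros s Hs. specialize (hdom s ltac:(lra)). specialize (Hrad s Hs).
    specialize (HPpos s Hs).
    set (Rs := radius R0 c s) in *. set (P := E + b * Rs^3) in *.
    assert (Hsq : (zf s)^2 = (Q s ^ 2 / Rs ^ 2) * / P^2) by (unfold zf; fold Rs P; field; lra).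
    assert ((zf s)^2 <= 1); [|nra].
    rewrite Hsq. replace 1 with (P^2 * / P^2) by (field; lra).
    apply Rmult_le_compat_r; [left; apply Rinv_0_lt_compat; nra|lra]. }
  assert (Hzc : forall s, 0 <= s <= t -> continuous zf s).
  { intros s Hs. specialize (Hrad s Hs). specialize (HPpos s Hs).
    apply (continuous_ext (fun s => mult (Q s) (/ (radius R0 c s * (E + b * radius R0 c s ^ 3))))).
    { intros; reflexivity. }
    apply (continuous_mult (K := R_AbsRing) Q (fun s => / (radius R0 c s * (E + b * radius R0 c s ^ 3)))).
    - apply hQcont; lra.
    - apply (continuous_Rinv_comp (fun s => radius R0 c s * (E + b * radius R0 c s ^ 3))).
      + apply (ex_derive_continuous (K := R_AbsRing) (V := R_NormedModule)).
        unfold radius; auto_derive; auto.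
      + apply Rgt_not_eq. apply Rmult_lt_0_compat; lra. }
  assert (Hzd : forall s, 0 < s < t -> is_derive zf s
     (Derive Q s / (radius R0 c s * (E + b * radius R0 c s ^ 3))
      - zf s * (c * ((E + b * radius R0 c s ^ 3) + 3 * b * radius R0 c s ^ 3))
        / (radius R0 c s * (E + b * radius R0 c s ^ 3)))).
  { intros s Hs. specialize (Hrad s ltac:(lra)). specialize (HPpos s ltac:(lra)).
    unfold zf. revert Hrad HPpos. unfold radius. intros Hrad HPpos.
    auto_derive.
    - split; [apply hQder; lra|]. split; [|auto]. apply Rgt_not_eq.
      simpl in HPpos. apply Rmult_lt_0_compat; lra.
    - simpl in HPpos. change (fun x : R => Q x) with Q. set (DQ := Derive Q s). set (q := Q s). simpl. field. split; lra. }
  assert (HF2 : forall s, 0 < s < t -> 0 <= zf s ->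
     Derive zf s >= (1 - sqrt (1 - zf s ^ 2) - A * zf s - B) / radius R0 c s).
  { intros s Hs Hz. rewrite (is_derive_unique _ _ _ (Hzd s Hs)).
    specialize (Hrad s ltac:(lra)).
    unfold zf in *. unfold A, B.
    apply key_ineq; auto; try lra.
    - apply hdom; lra.
    - apply hineq; lra. }
  assert (Hdom : forall y, z1 <= y <= 1 -> zz < y /\ A*y + B < 1).
  { intros y Hy. split; [lra|nra]. }
  assert (Hstay : forall s, 0 <= s <= t -> zf s > z1).
  { apply (stay_above zf 0 t z1); try lra.
    - unfold zf, radius. replace (R0 + c*0) with R0 by ring. unfold z1; lra.
    - intros x Hx; apply Hzc; auto.
    - intros x Hx. exact (ex_intro _ _ (Hzd x Hx)).
    - intros x Hx Hgt.
      assert (Hx1 := Hle1 x ltac:(lra)).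
      destruct (Hdom (zf x)) as [Hd1 Hd2]; [lra|].
      pose proof (fpos A B (zf x) HA hAB1 Hd1 Hd2).
      pose proof (HF2 x Hx ltac:(lra)).
      specialize (Hrad x ltac:(lra)).
      assert (0 < (1 - sqrt (1 - zf x ^ 2) - A * zf x - B) / radius R0 c x)
        by (apply Rdiv_lt_0_compat; lra).
      lra. }
  set (G := fun y => RInt (integrand A B) z1 y).
  assert (HG : forall y, z1 <= y <= 1 -> is_derive G y (integrand A B y)).
  { intros y Hy. destruct (Hdom y Hy). apply G_deriv; auto. }
  assert (HGpos : forall y, z1 <= y <= 1 -> 0 < integrand A B y).
  { intros y Hy. destruct (Hdom y Hy). unfold integrand.
    apply Rinv_0_lt_compat, fpos; auto. }
  assert (HGmono : forall u v, z1 <= u <= v -> v <= 1 -> G u <= G v).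
  { intros u v Huv Hv. apply (mono_le G (integrand A B)); [lra| | |].
    - intros x Hx. apply HG. lra.
    - intros x Hx. apply (ex_derive_continuous (K := R_AbsRing) (V := R_NormedModule)).
      eexists. apply HG. lra.
    - intros x Hx. left. apply HGpos. lra. }
  set (h := fun s => G (zf s) - ln (radius R0 c s)).
  assert (Hh : h 0 <= h t).
  { apply (mono_le h (fun s => Derive zf s * integrand A B (zf s) - c / radius R0 c s)); [lra| | |].
    - intros x Hx. unfold h.
      assert (Hzx := Hstay x ltac:(lra)). assert (Hx1 := Hle1 x ltac:(lra)).
      specialize (Hrad x ltac:(lra)).
      apply (is_derive_minus (fun s => G (zf s)) (fun s => ln (radius R0 c s))).
      + apply (is_derive_comp G zf x (integrand A B (zf x)) (Derive zf x)).
        * apply HG. lra.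
        * apply Derive_correct. exact (ex_intro _ _ (Hzd x Hx)).
      + unfold radius in *. auto_derive. lra. field. lra.
    - intros x Hx. unfold h.
      assert (Hzx := Hstay x Hx). assert (Hx1 := Hle1 x Hx).
      specialize (Hrad x Hx).
      apply (continuous_minus (V := R_NormedModule) (fun s => G (zf s)) (fun s => ln (radius R0 c s))).
      + apply (continuous_comp (U := R_UniformSpace) (V := R_UniformSpace) (W := R_UniformSpace) zf G).
        * apply Hzc; auto.
        * apply (ex_derive_continuous (K := R_AbsRing) (V := R_NormedModule)).
          eexists. apply HG. lra.
      + apply (ex_derive_continuous (K := R_AbsRing) (V := R_NormedModule) (fun s => ln (radius R0 c s))).
        unfold radius in *. auto_derive. lra.
    - intros x Hx.
      assert (Hzx := Hstay x ltac:(lra)). assert (Hx1 := Hle1 x ltac:(lra)).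
      destruct (Hdom (zf x)) as [Hd1 Hd2]; [lra|].
      pose proof (fpos A B (zf x) HA hAB1 Hd1 Hd2) as Hf.
      pose proof (HF2 x Hx ltac:(lra)) as Hder.
      specialize (Hrad x ltac:(lra)).
      set (F := 1 - sqrt (1 - zf x ^ 2) - A * zf x - B) in *.
      set (Rx := radius R0 c x) in *.
      unfold integrand. fold F.
      assert (Hq : Derive zf x * / F >= F / Rx * / F).
      { apply Rle_ge, Rmult_le_compat_r; [left; apply Rinv_0_lt_compat; lra | lra]. }
      replace (F / Rx * / F) with (/ Rx) in Hq by (field; lra).
      assert (c / Rx <= / Rx).
      { unfold Rdiv. rewrite <- (Rmult_1_l (/ Rx)) at 2.
        apply Rmult_le_compat_r; [left; apply Rinv_0_lt_compat; lra | lra]. }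
      lra. }
  unfold h in Hh.
  assert (Hz0 := Hstay 0 ltac:(lra)). assert (Hz01 := Hle1 0 ltac:(lra)).
  assert (Hzt := Hstay t ltac:(lra)). assert (Hzt1 := Hle1 t ltac:(lra)).
  assert (HG1 : G z1 <= G (zf 0)) by (apply HGmono; lra).
  assert (HG2 : G (zf t) <= G 1) by (apply HGmono; lra).
  assert (HGz1 : G z1 = 0) by (unfold G; exact (RInt_point (V := R_CompleteNormedModule) z1 (integrand A B))).
  assert (HGI : G 1 = I) by reflexivity.
  replace (radius R0 c 0) with R0 in Hh by (unfold radius; ring).
  replace (radius R0 c t) with r in Hh by (unfold radius; lra).
  assert (Hln : I < ln r - ln R0).
  { rewrite <- ln_div by lra. rewrite <- (ln_exp I).
    apply ln_increasing. apply exp_pos.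
    apply (Rmult_lt_reg_l R0); auto. replace (R0 * (r / R0)) with r by (field; lra). lra. }
  lra.
Qed.
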